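(* Let $L$ be a $\kappa$-frame. The map $a\mapsto\partial_{(\downarrow a)^{**}}$ is a $\kappa$-frame homomorphism from $L$ to the frame ${\uparrow}\mathfrak{D}_L=\{C\in\mathbb{C}L\mid C\supseteq\mathfrak{D}_L\}$, and its kernel $\{(a,b)\mid\partial_{(\downarrow a)^{**}}=\partial_{(\downarrow b)^{**}}\}$ equals $\mathfrak{D}_L$. In particular this map is monotone, and the set of clear congruences of the form $\partial_{(\downarrow a)^{**}}$ ($a\in L$) is closed under finite meets and nonempty joins of fewer than $\kappa$ elements in $\mathbb{C}L$.
   Context: $\kappa$ is a fixed regular cardinal; a $\kappa$-frame is a bounded distributive lattice having joins of all subsets of cardinality $<\kappa$ and satisfying the frame distributive law for such joins; homomorphisms preserve finite meets and joins of $<\kappa$ elements. A $\kappa$-ideal is a downset in which every subset of cardinality $<\kappa$ has an upper bound; $\mathfrak{H}_\kappa L$ is the frame of $\kappa$-ideals under inclusion, $\downarrow a=\{x\mid x\le a\}$, and $J^*$ is the pseudocomplement in $\mathfrak{H}_\kappa L$. A congruence is an equivalence relation that is a sub-$\kappa$-frame of $L\times L$; $\mathbb{C}L$ is the frame of congruences under inclusion, and ${\uparrow}\mathfrak{D}_L$ carries the meets and joins of $\mathbb{C}L$, with bottom $\mathfrak{D}_L$. $\mathfrak{D}_L=\{(b,c)\mid\forall x\in L:\ b\wedge x=0\iff c\wedge x=0\}$; for a $\kappa$-ideal $I$, $\partial_I=\{(b,c)\mid\forall x\in L:\ b\wedge x\in I\iff c\wedge x\in I\}$, and congruences of this form are called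 clear. *)

(* Defs.v *)
From Stdlib Require Import Classical.

Set Implicit Arguments.

(** * Cardinals, represented by types *)
Definition injectiveF (A B : Type) (f : A -> B) : Prop :=
  forall x y, f x = f y -> x = y.

Definition lt_card (A B : Type) : Prop :=
  (exists f : A -> B, injectiveF f) /\ ~ (exists g : B -> A, injectiveF g).

Definition regular_cardinal (K : Type) : Prop :=
  (exists f : nat -> K, injectiveF f) /\
  forall (X I : Type) (F : I -> X -> Prop),
    lt_card I K ->
    (forall i, lt_card {x : X | F i x} K) ->
    lt_card {x : X | exists i, F i x} K.

Definition small (K X : Type) (S : X -> Prop) : Prop := lt_card {x : X | S x} K.

Record kFrame (K : Type) := {
  carrier :> Type;
  le : carrier -> carrier -> Prop;
  le_refl : forall x, le x x;
  le_trans : forall x y z, le x y -> le y z -> le x z;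
  le_antisym : forall x y, le x y -> le y x -> x = y;
  bot : carrier;
  top : carrier;
  bot_le : forall x, le bot x;
  le_top : forall x, le x top;
  meet : carrier -> carrier -> carrier;
  meet_glb : forall x y z, le z (meet x y) <-> (le z x /\ le z y);
  sup : (carrier -> Prop) -> carrier;
  sup_lub : forall S, small K S ->
    forall z, le (sup S) z <-> (forall s, S s -> le s z);
  (** frame distributive law for such joins (this also gives binary
      distributivity, as κ is infinite) *)
  frame_distr : forall a S, small K S ->
    meet a (sup S) = sup (fun y => exists s, S s /\ y = meet a s)
}.

Arguments le {K L} : rename.
Arguments bot {K L} : rename.
Arguments top {K L} : rename.
Arguments meet {K L} : rename.
Arguments sup {K L} : rename.

Section Defs.
Variables (K : Type) (L : kFrame K).

Definition kideal (I : L -> Prop) : Prop :=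
  (forall x y, le x y -> I y -> I x) /\
  (forall S : L -> Prop, small K S -> (forall s, S s -> I s) ->
     exists u, I u /\ forall s, S s -> le s u).

Definition down (a : L) : L -> Prop := fun x => le x a.

(** Pseudocomplement in the frame H_κ L of κ-ideals (ordered by inclusion,
    meet = intersection, bottom = ↓0): the largest κ-ideal whose intersection
    with J is ↓0, i.e. the union of all such κ-ideals. *)
Definition pcompl (J : L -> Prop) : L -> Prop :=
  fun x => exists I, kideal I /\ (forall y, I y -> J y -> y = bot) /\ I x.

Definition rel := L -> L -> Prop.

Definition rincl (C D : rel) : Prop := forall a b, C a b -> D a b.
Definition req (C D : rel) : Prop := forall a b, C a b <-> D a b.
Definition rfull : rel := fun _ _ => True.
Definition rcap (C D : rel) : rel := fun a b => C a b /\ D a b.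

Definition congruence (C : rel) : Prop :=
  (forall a, C a a) /\
  (forall a b, C a b -> C b a) /\
  (forall a b c, C a b -> C b c -> C a c) /\
  C bot bot /\ C top top /\
  (forall a b c d, C a b -> C c d -> C (meet a c) (meet b d)) /\
  (forall S : L * L -> Prop, small K S -> (forall p, S p -> C (fst p) (snd p)) ->
     C (sup (fun x => exists y, S (x, y))) (sup (fun y => exists x, S (x, y)))).

Definition DL : rel :=
  fun b c => forall x : L, meet b x = bot <-> meet c x = bot.

Definition partial (I : L -> Prop) : rel :=
  fun b c => forall x : L, I (meet b x) <-> I (meet c x).

Definition phi (a : L) : rel := partial (pcompl (pcompl (down a))).

(** Join in the frame ℂL of the congruences F s, s ∈ S: the least congruence
    containing all of them. *)
Definition cjoin (S : L -> Prop) (F : L -> rel) : rel :=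
  fun a b => forall C, congruence C -> (forall s, S s -> rincl (F s) C) -> C a b.

(** Join in ↑𝔇_L = {C ∈ ℂL | C ⊇ 𝔇_L}: the least congruence containing 𝔇_L
    and all F s, s ∈ S (for S empty this is the bottom 𝔇_L). *)
Definition upjoin (S : L -> Prop) (F : L -> rel) : rel :=
  fun a b => forall C, congruence C -> rincl DL C ->
    (forall s, S s -> rincl (F s) C) -> C a b.

End Defs.

Arguments kideal {K L}.
Arguments down {K L}.
Arguments pcompl {K L}.
Arguments rincl {K L}.
Arguments req {K L}.
Arguments rcap {K L}.
Arguments congruence {K L}.
Arguments partial {K L}.
Arguments phi {K L}.
Arguments cjoin {K L}.
Arguments upjoin {K L}.

(* Main.v *)
Require Import Defs.
From Stdlib Require Import Classical ProofIrrelevance FunctionalExtensionality PropExtensionality.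
Set Implicit Arguments.


Lemma meet_l {K} {L : kFrame K} (x y : L) : le (meet x y) x.
Proof. apply (proj1 (meet_glb L x y (meet x y)) (le_refl L _)). Qed.
Lemma meet_r {K} {L : kFrame K} (x y : L) : le (meet x y) y.
Proof. apply (proj1 (meet_glb L x y (meet x y)) (le_refl L _)). Qed.
Lemma le_meet {K} {L : kFrame K} (x y z : L) : le z x -> le z y -> le z (meet x y).
Proof. intros; apply (meet_glb L); auto. Qed.
Lemma meet_comm {K} {L : kFrame K} (x y : L) : meet x y = meet y x.
Proof. apply (le_antisym L); apply le_meet; (apply meet_l || apply meet_r). Qed.
Lemma meet_assoc {K} {L : kFrame K} (x y z : L) : meet (meet x y) z = meet x (meet y z).
Proof.
  apply (le_antisym L); repeat apply le_meet;
  eauto using meet_l, meet_r, (le_trans L).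
Qed.
Lemma le_bot {K} {L : kFrame K} (x : L) : le x bot -> x = bot.
Proof. intros; apply (le_antisym L); auto using (bot_le L). Qed.
Lemma meet_mono {K} {L : kFrame K} (x x' y : L) : le x x' -> le (meet x y) (meet x' y).
Proof. intros; apply le_meet; eauto using meet_l, meet_r, (le_trans L). Qed.
Lemma meet_bot_l {K} {L : kFrame K} (x : L) : meet bot x = bot.
Proof. apply le_bot, meet_l. Qed.
Lemma meet_top_l {K} {L : kFrame K} (x : L) : meet top x = x.
Proof. apply (le_antisym L). apply meet_r. apply le_meet. apply (le_top L). apply (le_refl L). Qed.
Lemma meet_idem {K} {L : kFrame K} (x : L) : meet x x = x.
Proof. apply (le_antisym L). apply meet_l. apply le_meet; apply (le_refl L). Qed.
Lemma meet_le_bot {K} {L : kFrame K} (x y : L) : le x y -> meet y x = bot -> x = bot.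
Proof. intros H H'. apply le_bot. rewrite <- H'. apply le_meet; auto. apply (le_refl L). Qed.
Lemma inj_lt (K A B : Type) (f : A -> B) : injectiveF f -> lt_card B K -> lt_card A K.
Proof.
  intros Hf [[g Hg] Hn]. split.
  - exists (fun x => g (f x)). intros x y E. apply Hf, Hg, E.
  - intros [h Hh]. apply Hn. exists (fun k => f (h k)). intros x y E. apply Hh, Hf, E.
Qed.

Lemma small_sub (K X : Type) (S T : X -> Prop) : small K S -> (forall x, T x -> S x) -> small K T.
Proof.
  intros HS H. unfold small in *.
  apply (inj_lt (f:=fun p : {x | T x} => exist S (proj1_sig p) (H _ (proj2_sig p)))); auto.
  intros [x px] [y py] E. simpl in E. injection E. intros ->.
  f_equal. apply proof_irrelevance.
Qed.

Lemma small_single (K X : Type) (hK : regular_cardinal K) (b : X) : small K (fun z => z = b).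
Proof.
  unfold small. destruct hK as [[g Hg] _]. split.
  - exists (fun _ : {z : X | z = b} => g 0). intros [x px] [y py] _. subst. f_equal; apply proof_irrelevance.
  - intros [h Hh]. assert (E : h (g 0) = h (g 1)).
    { destruct (h (g 0)) as [x px], (h (g 1)) as [y py]. subst. f_equal; apply proof_irrelevance. }
    apply Hh, Hg in E. discriminate.
Qed.

Lemma bool_lt (K : Type) (hK : regular_cardinal K) : lt_card bool K.
Proof.
  destruct hK as [[g Hg] _]. split.
  - exists (fun b : bool => if b then g 0 else g 1). intros [|] [|] E; auto;
    apply Hg in E; discriminate.
  - intros [h Hh].
    assert (H01 : h (g 0) <> h (g 1)) by (intro E; apply Hh, Hg in E; discriminate).
    assert (H02 : h (g 0) <> h (g 2)) by (intro E; apply Hh, Hg in E; discriminate).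
    assert (H12 : h (g 1) <> h (g 2)) by (intro E; apply Hh, Hg in E; discriminate).
    destruct (h (g 0)), (h (g 1)), (h (g 2)); congruence.
Qed.

Lemma small_image (K A X : Type) (hK : regular_cardinal K) (S : A -> Prop) (f : A -> X) :
  small K S -> small K (fun y => exists p, S p /\ y = f p).
Proof.
  intros HS.
  pose proof (proj2 hK X {p | S p} (fun i y => y = f (proj1_sig i)) HS
    (fun i => small_single hK (f (proj1_sig i)))) as H.
  eapply small_sub; [exact H|]. intros y [p [Hp ->]]. exists (exist _ p Hp). reflexivity.
Qed.

Lemma small_pair (K X : Type) (hK : regular_cardinal K) (x y : X) :
  small K (fun z => z = x \/ z = y).
Proof.
  pose proof (proj2 hK X bool (fun (b : bool) z => z = if b then x else y) (bool_lt hK)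
    (fun b => small_single hK _)) as H.
  eapply small_sub; [exact H|]. intros z [->| ->]. exists true; auto. exists false; auto.
Qed.
Lemma sup_ub {K} {L : kFrame K} (S : L -> Prop) (s : L) : small K S -> S s -> le s (sup S).
Proof. intros HS Hs. apply (proj1 (sup_lub L HS (sup S)) (le_refl L _)); auto. Qed.
Lemma sup_le {K} {L : kFrame K} (S : L -> Prop) (z : L) :
  small K S -> (forall s, S s -> le s z) -> le (sup S) z.
Proof. intros HS H. apply (proj2 (sup_lub L HS z)); auto. Qed.

Lemma ann_sup {K} (hK : regular_cardinal K) {L : kFrame K} (X : L -> Prop) (w : L) :
  small K X -> (meet (sup X) w = bot <-> forall s, X s -> meet s w = bot).
Proof.
  intros HX. rewrite meet_comm, (frame_distr L w HX).
  assert (HY : small K (fun y => exists s, X s /\ y = meet w s)) by (apply small_image; auto).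
  split.
  - intros E s Hs. rewrite meet_comm. apply le_bot. rewrite <- E. apply sup_ub; eauto.
  - intros H. apply le_bot. apply sup_le; auto. intros y [s [Hs ->]].
    rewrite meet_comm, H; auto. apply (le_refl L).
Qed.

Definition Qp {K} {L : kFrame K} (a w : L) : Prop :=
  forall y : L, meet y a = bot -> meet w y = bot.
Arguments Qp {K L}.

Lemma pcompl_ext {K} {L : kFrame K} (J J' : L -> Prop) :
  (forall x, J x <-> J' x) -> forall x, pcompl J x <-> pcompl J' x.
Proof.
  intros H x. unfold pcompl. split; intros [I [HI [HD Hx]]]; exists I; split; auto; split; auto;
  intros y Hy Hy'; apply HD; auto; apply H; auto.
Qed.

Lemma pc1 {K} (hK : regular_cardinal K) {L : kFrame K} (a x : L) :
  pcompl (down a) x <-> meet x a = bot.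
Proof.
  split.
  - intros [I [[Hdown _] [HD Hx]]]. apply HD.
    + eapply Hdown; [apply meet_l|exact Hx].
    + apply meet_r.
  - intros Hx. exists (fun z => meet z a = bot). split; [split|split]; auto.
    + intros u v Huv Hv. apply le_bot. rewrite <- Hv. apply meet_mono; auto.
    + intros S HS HSs. exists (sup S). split.
      * apply ann_sup; auto.
      * intros; apply sup_ub; auto.
    + intros y Hy Hya. unfold down in Hya. rewrite <- Hy. apply (le_antisym L).
      apply le_meet; auto. apply (le_refl L). apply meet_l.
Qed.

Lemma pc2 {K} (hK : regular_cardinal K) {L : kFrame K} (a x : L) :
  pcompl (fun z => meet z a = bot) x <-> Qp a x.
Proof.
  split.
  - intros [I [[Hdown _] [HD Hx]]] y Hy. apply HD.
    + eapply Hdown; [apply meet_l|exact Hx].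
    + apply le_bot. rewrite <- Hy. apply meet_mono, meet_r.
  - intros Hx. exists (Qp a). split; [split|split]; auto.
    + intros u v Huv Hv y Hy. apply le_bot. rewrite <- (Hv y Hy). apply meet_mono; auto.
    + intros S HS HSs. exists (sup S). split.
      * intros y Hy. apply ann_sup; auto. intros s Hs; apply HSs; auto.
      * intros; apply sup_ub; auto.
    + intros y Hy Hya. rewrite <- (meet_idem y). apply Hy; auto.
Qed.

Lemma PQ {K} (hK : regular_cardinal K) {L : kFrame K} (a x : L) :
  pcompl (pcompl (down a)) x <-> Qp a x.
Proof.
  rewrite <- (pc2 hK a x). apply pcompl_ext. intros; apply pc1; auto.
Qed.

Definition Phi {K} {L : kFrame K} (a b c : L) : Prop :=
  forall x, Qp a (meet b x) <-> Qp a (meet c x).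
Arguments Phi {K L}.

Lemma phi_Phi {K} (hK : regular_cardinal K) {L : kFrame K} (a b c : L) :
  phi a b c <-> Phi a b c.
Proof.
  unfold phi, partial, Phi. split; intros H x; specialize (H x); rewrite !(PQ hK) in *; exact H.
Qed.
Lemma Q_down {K} {L : kFrame K} (a w w' : L) : le w w' -> Qp a w' -> Qp a w.
Proof. intros H H' y Hy. apply le_bot. rewrite <- (H' y Hy). apply meet_mono; auto. Qed.
Lemma Q_le {K} {L : kFrame K} (a w : L) : le w a -> Qp a w.
Proof. intros H y Hy. apply le_bot. rewrite <- Hy. rewrite (meet_comm y a). apply meet_mono; auto. Qed.
Lemma Q_bot {K} {L : kFrame K} (a : L) : Qp a bot.
Proof. intros y _. apply meet_bot_l. Qed.
Lemma Q_disj {K} {L : kFrame K} (a w : L) : Qp a w -> meet w a = bot -> w = bot.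
Proof. intros H E. rewrite <- (meet_idem w). apply H; auto. Qed.
Lemma Q_mono {K} {L : kFrame K} (a a' w : L) : le a a' -> Qp a w -> Qp a' w.
Proof. intros Ha H y Hy. apply H. apply le_bot. rewrite <- Hy. rewrite !(meet_comm y). apply meet_mono; auto. Qed.
Lemma Q_meet {K} {L : kFrame K} (a b w : L) : Qp a w -> Qp b w -> Qp (meet a b) w.
Proof.
  intros Ha Hb y Hy.
  set (z := meet (meet w y) b).
  assert (Hzy : le z y) by (apply (le_trans L _ (meet w y)); [apply meet_l|apply meet_r]).
  assert (Hzb : le z b) by apply meet_r.
  assert (E1 : meet z a = bot).
  { apply le_bot. rewrite <- Hy. apply le_meet.
    - apply (le_trans L _ z); [apply meet_l|auto].
    - apply le_meet; [apply meet_r|]. apply (le_trans L _ z); [apply meet_l|auto]. }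
  pose proof (Ha _ E1) as E2. unfold z in E2.
  rewrite <- !meet_assoc, meet_idem in E2.
  assert (E3 := Hb _ E2). rewrite <- meet_assoc, meet_idem in E3. exact E3.
Qed.
Lemma Q_top {K} {L : kFrame K} (w : L) : Qp top w.
Proof. intros y Hy. rewrite meet_comm, meet_top_l in Hy. rewrite Hy, meet_comm. apply meet_bot_l. Qed.
Lemma Q_sup {K} (hK : regular_cardinal K) {L : kFrame K} (a x : L) (X : L -> Prop) :
  small K X -> (Qp a (meet (sup X) x) <-> forall s, X s -> Qp a (meet s x)).
Proof.
  intros HX. unfold Qp. split.
  - intros H s Hs y Hy. rewrite meet_assoc. apply (ann_sup hK (meet x y) HX); auto.
    rewrite <- meet_assoc; auto.
  - intros H y Hy. rewrite meet_assoc. apply (ann_sup hK (meet x y) HX). intros s Hs.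
    rewrite <- meet_assoc; auto.
Qed.

Lemma sup_ext {K} {L : kFrame K} (S T : L -> Prop) : (forall x, S x <-> T x) -> sup S = sup T.
Proof.
  intros H. f_equal. apply functional_extensionality. intro x. apply propositional_extensionality. apply H.
Qed.

Lemma Phi_DL {K} {L : kFrame K} (a b c : L) : DL L b c -> Phi a b c.
Proof.
  intros H x. unfold Qp. split; intros Hq y Hy; specialize (Hq y Hy);
  rewrite meet_assoc in *; apply H; auto.
Qed.

Lemma Phi_D {K} {L : kFrame K} (a u v z : L) : Phi a u v -> meet a z = bot ->
  (meet u z = bot <-> meet v z = bot).
Proof.
  intros H Ha. assert (Hz : meet z a = bot) by (rewrite meet_comm; auto).
  split; intros E.
  - apply (Q_disj (a:=a)). apply (proj1 (H z)). rewrite E. apply Q_bot.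
    apply le_bot. rewrite <- Hz. apply meet_mono, meet_r.
  - apply (Q_disj (a:=a)). apply (proj2 (H z)). rewrite E. apply Q_bot.
    apply le_bot. rewrite <- Hz. apply meet_mono, meet_r.
Qed.

Lemma Phi_mono {K} {L : kFrame K} (a a' b c : L) : le a a' -> Phi a b c -> Phi a' b c.
Proof.
  intros Ha H.
  assert (G : forall u v, Phi a u v -> forall x, Qp a' (meet u x) -> Qp a' (meet v x)).
  { intros u v Huv x Hu y Hy.
    assert (E1 : meet u (meet x y) = bot) by (rewrite <- meet_assoc; auto).
    assert (E2 : Qp a (meet v (meet x y))) by (apply (proj1 (Huv (meet x y))); rewrite E1; apply Q_bot).
    rewrite meet_assoc. apply (Q_disj (a:=a')). apply (Q_mono a' Ha); auto.
    apply le_bot. rewrite <- Hy. apply meet_mono.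
    apply (le_trans L _ (meet x y)); apply meet_r. }
  intros x; split; apply G; auto. intros y; symmetry; apply H.
Qed.

Lemma Phi_0s {K} {L : kFrame K} (s : L) : Phi s bot s.
Proof.
  intros x. split; intros _.
  - apply Q_le, meet_l.
  - rewrite meet_bot_l. apply Q_bot.
Qed.

Lemma Phi_meet_iff {K} {L : kFrame K} (a b c d : L) : Phi (meet a b) c d <-> Phi a c d /\ Phi b c d.
Proof.
  split.
  - intros H; split; eapply Phi_mono; eauto; [apply meet_l|apply meet_r].
  - intros [Ha Hb] x. split; intros H.
    + apply Q_meet. apply Ha, (Q_mono a (meet_l a b)); auto. apply Hb, (Q_mono b (meet_r a b)); auto.
    + apply Q_meet. apply Ha, (Q_mono a (meet_l a b)); auto. apply Hb, (Q_mono b (meet_r a b)); auto.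
Qed.

Lemma Phi_top {K} {L : kFrame K} (b c : L) : Phi top b c.
Proof. intros x; split; intros; apply Q_top. Qed.

Lemma Phi_cong {K} (hK : regular_cardinal K) {L : kFrame K} (a : L) : congruence (phi a).
Proof.
  unfold congruence. setoid_rewrite (phi_Phi hK). unfold Phi.
  split; [|split; [|split; [|split; [|split; [|split]]]]].
  - intros; reflexivity.
  - intros b c H x; symmetry; auto.
  - intros b c d H1 H2 x. rewrite H1; auto.
  - intros; reflexivity.
  - intros; reflexivity.
  - intros b c d e H1 H2 x.
    rewrite !meet_assoc. rewrite (H1 (meet d x)).
    rewrite <- !meet_assoc, (meet_comm c d), (meet_comm c e), !meet_assoc. apply H2.
  - intros S HS HSp x.
    assert (HF : small K (fun x => exists y, S (x, y))).
    { eapply small_sub. apply (small_image hK fst HS). intros u [y Hy]. exists (u, y); auto. }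
    assert (HG : small K (fun y => exists x, S (x, y))).
    { eapply small_sub. apply (small_image hK snd HS). intros u [y Hy]. exists (y, u); auto. }
    rewrite (Q_sup hK _ _ HF), (Q_sup hK _ _ HG). split.
    + intros H t [s Hst]. apply (HSp _ Hst). apply H. exists t; auto.
    + intros H s [t Hst]. apply (HSp _ Hst). apply H. exists s; auto.
Qed.

Definition join {K} {L : kFrame K} (x y : L) : L := sup (fun z => z = x \/ z = y).

Lemma cong_join2 {K} (hK : regular_cardinal K) {L : kFrame K} (C : rel L) (x1 y1 x2 y2 : L) :
  congruence C -> C x1 y1 -> C x2 y2 -> C (join x1 x2) (join y1 y2).
Proof.
  intros [_ [_ [_ [_ [_ [_ Csup]]]]]] H1 H2.
  set (T := fun p : L * L => p = (x1, y1) \/ p = (x2, y2)).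
  assert (HT : small K T) by apply small_pair, hK.
  assert (HC := Csup T HT). unfold join.
  rewrite (sup_ext (fun z => z = x1 \/ z = x2) (fun x => exists y, T (x, y))).
  rewrite (sup_ext (fun z => z = y1 \/ z = y2) (fun y => exists x, T (x, y))).
  - apply HC. intros p [-> | ->]; auto.
  - unfold T; intros z; split.
    + intros [->| ->]; eauto.
    + intros [x [E|E]]; injection E; auto.
  - unfold T; intros z; split.
    + intros [->| ->]; eauto.
    + intros [x [E|E]]; injection E; auto.
Qed.

Lemma join_bot_r {K} (hK : regular_cardinal K) {L : kFrame K} (b : L) : join b bot = b.
Proof.
  apply (le_antisym L).
  - apply sup_le. apply small_pair, hK. intros s [->| ->]. apply (le_refl L). apply (bot_le L).
  - apply sup_ub. apply small_pair, hK. auto.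
Qed.

Lemma ann_join {K} (hK : regular_cardinal K) {L : kFrame K} (b a z : L) :
  meet (join b a) z = bot <-> meet b z = bot /\ meet a z = bot.
Proof.
  unfold join. rewrite (ann_sup hK). split.
  - intros H; split; apply H; auto.
  - intros [H1 H2] s [->| ->]; auto.
  - apply small_pair, hK.
Qed.

Lemma sup_into {K} (hK : regular_cardinal K) {L : kFrame K} (S : L -> Prop) (b c : L) (C : rel L) :
  small K S -> congruence C -> rincl (DL L) C -> (forall s, S s -> rincl (phi s) C) ->
  Phi (sup S) b c -> C b c.
Proof.
  intros HS HC HDL HphiC H.
  pose proof HC as [Cr [Cs [Ct [_ [_ [_ Csup]]]]]].
  set (a := sup S).
  assert (C0a : C bot a).
  { set (T := fun p : L * L => S (snd p) /\ fst p = bot).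
    assert (HT : small K T).
    { eapply small_sub. apply (small_image hK (fun s => (@bot K L, s)) HS).
      intros [u v] [Hv Hu]. simpl in *. subst. exists v; auto. }
    assert (HF : small K (fun x => exists y, T (x, y))).
    { eapply small_sub. apply (small_image hK fst HT). intros u [y Hy]. exists (u, y); auto. }
    assert (E1 : sup (fun x => exists y, T (x, y)) = bot).
    { apply le_bot, sup_le; auto. intros s [y [_ E]]. simpl in E. subst. apply (le_refl L). }
    assert (E2 : sup (fun y => exists x, T (x, y)) = a).
    { apply sup_ext. intros y; split. intros [x [Hy _]]; auto. intros Hy; exists bot; split; auto. }
    rewrite <- E1, <- E2. apply Csup; auto.
    intros [u v] [Hv Hu]. simpl in *. subst. apply (HphiC v Hv). apply (phi_Phi hK). apply Phi_0s. }
  assert (Hb : C b (join b a)).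
  { rewrite <- (join_bot_r hK b) at 1. apply cong_join2; auto. }
  assert (Hc : C c (join c a)).
  { rewrite <- (join_bot_r hK c) at 1. apply cong_join2; auto. }
  assert (Hbc : C (join b a) (join c a)).
  { apply HDL. intros z. rewrite !(ann_join hK). split; intros [E1 E2]; split; auto.
    - exact (proj1 (@Phi_D K L a b c z H E2) E1).
    - exact (proj2 (@Phi_D K L a b c z H E2) E1). }
  eauto.
Qed.
Lemma Q_DL {K} {L : kFrame K} (a b w : L) : DL L a b -> (Qp a w <-> Qp b w).
Proof.
  intros H. unfold Qp. split; intros Hq y Hy; apply Hq; rewrite meet_comm in *; apply H; auto.
Qed.

Lemma phi_le {K} (hK : regular_cardinal K) {L : kFrame K} (S : L -> Prop) (s : L) :
  small K S -> S s -> rincl (phi s) (phi (sup S)).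
Proof.
  intros HS Hs u v H. apply (phi_Phi hK). apply (phi_Phi hK) in H.
  eapply Phi_mono; [apply sup_ub|]; eauto.
Qed.

Theorem mainTheorem19 (K : Type) (hK : regular_cardinal K) (L : kFrame K) :
  (* the map lands in ↑𝔇_L *)
  (forall a : L, congruence (phi a) /\ rincl (@DL K L) (phi a)) /\
  (* it is a κ-frame homomorphism L → ↑𝔇_L *)
  req (phi (@top K L)) (@rfull K L) /\
  (forall a b : L, req (phi (meet a b)) (rcap (phi a) (phi b))) /\
  (forall S : L -> Prop, small K S -> req (phi (sup S)) (upjoin S (@phi K L))) /\
  (* its kernel is 𝔇_L *)
  (forall a b : L, req (phi a) (phi b) <-> @DL K L a b) /\
  (* in particular: monotone *)
  (forall a b : L, le a b -> rincl (phi a) (phi b)) /\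
  (* closed under finite meets in ℂL *)
  (exists c : L, req (phi c) (@rfull K L)) /\
  (forall a b : L, exists c : L, req (phi c) (rcap (phi a) (phi b))) /\
  (* closed under nonempty joins of fewer than κ elements in ℂL *)
  (forall S : L -> Prop, small K S -> (exists s, S s) ->
     exists c : L, req (phi c) (cjoin S (@phi K L))).
Proof.
  assert (P1 : forall a : L, congruence (phi a) /\ rincl (@DL K L) (phi a)).
  { intros a; split. apply Phi_cong; auto. intros b c H. apply (phi_Phi hK), Phi_DL; auto. }
  assert (P2 : req (phi (@top K L)) (@rfull K L)).
  { intros b c; split; intros _. exact I. apply (phi_Phi hK), Phi_top. }
  assert (P3 : forall a b : L, req (phi (meet a b)) (rcap (phi a) (phi b))).
  { intros a b c d; unfold rcap; rewrite !(phi_Phi hK); apply Phi_meet_iff. }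
  split; [exact P1|]. split; [exact P2|]. split; [exact P3|].
  split; [|split; [|split; [|split; [|split]]]].
  - intros S HS b c; split.
    + intros H C HC HDL HF. apply (phi_Phi hK) in H. eapply sup_into; eauto.
    + intros H. apply H. apply P1. apply P1. intros s Hs. apply phi_le; auto.
  - intros a b; split.
    + intros H z; split; intros E.
      * assert (Hab : Phi a bot b) by (apply (phi_Phi hK), H, (phi_Phi hK), Phi_0s).
        apply (proj1 (@Phi_D K L a bot b z Hab E)). apply meet_bot_l.
      * assert (Hba : Phi b bot a) by (apply (phi_Phi hK), H, (phi_Phi hK), Phi_0s).
        apply (proj1 (@Phi_D K L b bot a z Hba E)). apply meet_bot_l.
    + intros H u v. rewrite !(phi_Phi hK). unfold Phi.
      assert (HQ : forall w, Qp a w <-> Qp b w) by (intros; apply Q_DL; auto).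
      split; intros G x; specialize (G x).
      * rewrite !HQ in G; exact G.
      * rewrite !HQ; exact G.
  - intros a b Hab u v H. apply (phi_Phi hK) in H. apply (phi_Phi hK). eapply Phi_mono; eauto.
  - exists top; auto.
  - intros a b; exists (meet a b); auto.
  - intros S HS [s0 Hs0]. exists (sup S). intros b c; split.
    + intros H C HC HF. apply (phi_Phi hK) in H. eapply sup_into; eauto.
      intros u v Huv. apply (HF s0 Hs0). apply P1; auto.
    + intros H. apply H. apply P1. intros s Hs. apply phi_le; auto.
Qed.
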